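(* Consider an affine IFS with attractor $X$ and invariant measure $\mu$, and suppose the fixed point condition holds for some $k\in\mathbb{N}$ and $\tau\in\mathcal{A}_k$. Then there exist $n_0\in\mathbb{N}$ and a constant $C$ independent of $n$ such that $$\mu(\tau^n(X))=C\,p_\tau^n\quad\text{for all }n\ge n_0,$$ where $\tau^n$ denotes the $n$-fold composition of $\tau$.
   Context: Affine IFS: $R$ real $d\times d$ expansive matrix, $\mathcal{B}=\{b_1,\dots,b_N\}\subset\mathbb{R}^d$, weights $p_{b_i}>0$ summing to $1$, $\tau_{b_i}(x)=R^{-1}(x+b_i)$, attractor $X=\bigcup_i\tau_{b_i}(X)$, invariant measure $\mu=\sum_ip_{b_i}\mu\circ\tau_{b_i}^{-1}$. For a word $I=i_1\cdots i_n\in\{1,\dots,N\}^n$ let $\tau_I=\tau_{b_{i_1}}\circ\cdots\circ\tau_{b_{i_n}}$ and $p_I=p_{b_{i_1}}\cdots p_{b_{i_n}}$. $\mathcal{A}_n$ is the set of distinct maps among $\{\tau_I: I\in\{1,\dots,N\}^n\}$ (words giving the same map are identified), and for $\tau\in\mathcal{A}_n$, $p_\tau=\sum\{p_I:\tau_I=\tau\}$; thus $\mu=\sum_{\tau\in\mathcal{A}_n}p_\tau\mu\circ\tau^{-1}$. For $\tau\in\mathcal{A}_n$, $x_\tau$ denotes its fixed point. Fixed point condition (for $k$ and $\tau\in\mathcal{A}_k$): $x_\tau\notin\tilde\tau(X)$ for every $\tilde\tau\in\mathcal{A}_k$ with $\tilde\tau\ne\tau$. *)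

(* Defs.v *)
From Stdlib Require Import Fin Reals Lra Lia List Classical ClassicalEpsilon FunctionalExtensionality.
Import ListNotations.
Open Scope R_scope.

Definition Vec (d : nat) := Fin.t d -> R.
Definition Mat (d : nat) := Fin.t d -> Fin.t d -> R.
Definition set (d : nat) := Vec d -> Prop.

Fixpoint fin_sum (d : nat) : (Fin.t d -> R) -> R :=
  match d return (Fin.t d -> R) -> R with
  | O => fun _ => 0
  | S d' => fun f => f Fin.F1 + fin_sum d' (fun i => f (Fin.FS i))
  end.

Fixpoint sum_lt (n : nat) (f : nat -> R) : R :=
  match n with O => 0 | S m => sum_lt m f + f m end.

Definition mv {d} (A : Mat d) (x : Vec d) : Vec d := fun i => fin_sum d (fun j => A i j * x j).
Definition vadd {d} (x y : Vec d) : Vec d := fun i => x i + y i.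
Definition vscal {d} (a : R) (x : Vec d) : Vec d := fun i => a * x i.
Definition vnorm {d} (x : Vec d) : R := sqrt (fin_sum d (fun i => x i * x i)).
Definition vdist {d} (x y : Vec d) : R := vnorm (fun i => x i - y i).

(* expansive: every complex eigenvalue a + i b of the real matrix R
   (with eigenvector u + i w /= 0) satisfies |a + i b| > 1 *)
Definition expansive {d} (Rm : Mat d) : Prop :=
  forall (a b : R) (u w : Vec d),
    (exists i, u i <> 0 \/ w i <> 0) ->
    mv Rm u = (fun i => a * u i - b * w i) ->
    mv Rm w = (fun i => b * u i + a * w i) ->
    1 < a * a + b * b.

Definition is_open {d} (U : set d) : Prop :=
  forall x, U x -> exists eps, 0 < eps /\ forall y, vdist x y < eps -> U y.

Definition is_compact {d} (S : set d) : Prop :=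
  forall (I : Type) (U : I -> set d),
    (forall i, is_open (U i)) ->
    (forall x, S x -> exists i, U i x) ->
    exists l : list I, forall x, S x -> exists i, In i l /\ U i x.

Inductive borel {d} : set d -> Prop :=
  | borel_open : forall U, is_open U -> borel U
  | borel_compl : forall A, borel A -> borel (fun x => ~ A x)
  | borel_union : forall A : nat -> set d, (forall n, borel (A n)) ->
      borel (fun x => exists n, A n x).

Definition is_prob_measure {d} (mu : set d -> R) : Prop :=
  (forall A, borel A -> 0 <= mu A) /\
  mu (fun _ => False) = 0 /\
  mu (fun _ => True) = 1 /\
  (forall A : nat -> set d, (forall n, borel (A n)) ->
     (forall m n x, m <> n -> A m x -> A n x -> False) ->
     infinite_sum (fun n => mu (A n)) (mu (fun x => exists n, A n x))).

Definition image {d} (f : Vec d -> Vec d) (S : set d) : set d :=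
  fun x => exists y, S y /\ x = f y.
Definition preimage {d} (f : Vec d -> Vec d) (S : set d) : set d :=
  fun x => S (f x).

Definition tau {d} (Rinv : Mat d) (b : nat -> Vec d) (i : nat) (x : Vec d) : Vec d :=
  mv Rinv (vadd x (b i)).

Definition is_attractor {d} (Rinv : Mat d) (N : nat) (b : nat -> Vec d) (X : set d) : Prop :=
  (exists x, X x) /\ is_compact X /\
  (forall x, X x <-> exists i, (i < N)%nat /\ image (tau Rinv b i) X x).

Definition is_invariant {d} (Rinv : Mat d) (N : nat) (b : nat -> Vec d) (p : nat -> R)
    (mu : set d -> R) : Prop :=
  forall A, borel A -> mu A = sum_lt N (fun i => p i * mu (preimage (tau Rinv b i) A)).

Fixpoint tau_word {d} (Rinv : Mat d) (b : nat -> Vec d) (I : list nat) : Vec d -> Vec d :=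
  match I with
  | nil => fun x => x
  | i :: J => fun x => tau Rinv b i (tau_word Rinv b J x)
  end.

Fixpoint p_word (p : nat -> R) (I : list nat) : R :=
  match I with nil => 1 | i :: J => p i * p_word p J end.

Fixpoint words (N k : nat) : list (list nat) :=
  match k with
  | O => [nil]
  | S k' => flat_map (fun i => map (cons i) (words N k')) (seq 0 N)
  end.

Definition in_A {d} (Rinv : Mat d) (N : nat) (b : nat -> Vec d) (k : nat)
    (t : Vec d -> Vec d) : Prop :=
  exists I, length I = k /\ Forall (fun i => (i < N)%nat) I /\ tau_word Rinv b I = t.

Definition p_map {d} (Rinv : Mat d) (N : nat) (b : nat -> Vec d) (p : nat -> R) (k : nat)
    (t : Vec d -> Vec d) : R :=
  fold_right Rplus 0
    (map (fun I => if excluded_middle_informative (tau_word Rinv b I = t) then p_word p I else 0)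
         (words N k)).

Definition fixed_point_condition {d} (Rinv : Mat d) (N : nat) (b : nat -> Vec d)
    (X : set d) (k : nat) (t : Vec d -> Vec d) : Prop :=
  forall x, t x = x ->
    forall t', in_A Rinv N b k t' -> t' <> t -> ~ image t' X x.

(* Main.v *)
Require Import Defs.
From Stdlib Require Import Reals Lra Lia List Classical ClassicalEpsilon FunctionalExtensionality PropExtensionality.
Open Scope R_scope.

Lemma scal_decay (a eta : nat -> R) (rho : R) :
  0 <= rho < 1 -> (forall n, 0 <= a n) ->
  (forall n, a (S n) <= rho * a n + eta n) ->
  (forall e, 0 < e -> exists N, forall n, (N <= n)%nat -> eta n < e) ->
  forall e, 0 < e -> exists N, forall n, (N <= n)%nat -> a n < e.
Proof.
  intros Hr Ha Hrec Heta e He.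
  destruct (Heta ((1 - rho) * e / 2)) as [N1 HN1].
  { apply Rmult_lt_0_compat; [|lra]. apply Rmult_lt_0_compat; lra. }
  set (c := fun n => Rmax (a n - e/2) 0).
  assert (Hc : forall m, c (N1 + m)%nat <= rho ^ m * c N1).
  { induction m as [|m IH].
    - rewrite Nat.add_0_r. simpl. lra.
    - replace (N1 + S m)%nat with (S (N1 + m)) by lia.
      assert (H1 : c (S (N1 + m)) <= rho * c (N1 + m)%nat).
      { unfold c. pose proof (Hrec (N1 + m)%nat). pose proof (HN1 (N1 + m)%nat ltac:(lia)).
        assert (0 <= rho * Rmax (a (N1 + m)%nat - e / 2) 0).
        { apply Rmult_le_pos; [lra| apply Rmax_r]. }
        apply Rmax_lub; [|lra].
        apply Rle_trans with (rho * (a (N1+m)%nat - e/2)); [nra|].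
        apply Rmult_le_compat_l; [lra | apply Rmax_l]. }
      simpl. apply Rle_trans with (1 := H1). rewrite Rmult_assoc.
      apply Rmult_le_compat_l; lra. }
  assert (HcN : 0 <= c N1) by (unfold c; apply Rmax_r).
  destruct (pow_lt_1_zero rho ltac:(rewrite Rabs_right; lra) ((e/2) / (c N1 + 1))) as [m0 Hm0].
  { apply Rdiv_lt_0_compat; lra. }
  exists (N1 + m0)%nat. intros n Hn.
  replace n with (N1 + (n - N1))%nat by lia.
  pose proof (Hc (n - N1)%nat) as H.
  pose proof (Hm0 (n - N1)%nat ltac:(lia)) as H2.
  rewrite Rabs_right in H2 by (apply Rle_ge, pow_le; lra).
  assert (Hp : 0 <= rho ^ (n - N1)) by (apply pow_le; lra).
  assert (rho ^ (n - N1) * c N1 < e/2).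
  { apply Rle_lt_trans with (rho ^ (n - N1) * (c N1 + 1)); [nra|].
    apply Rmult_lt_reg_r with (/ (c N1 + 1)); [apply Rinv_0_lt_compat; lra|].
    rewrite Rmult_assoc, Rinv_r by lra. rewrite Rmult_1_r. exact H2. }
  assert (a (N1 + (n - N1))%nat - e/2 <= c (N1 + (n - N1))%nat) by (unfold c; apply Rmax_l).
  lra.
Qed.

From Stdlib Require Import Reals Lra.
From HB Require Import structures.
From mathcomp Require all_boot all_order all_algebra.
From mathcomp Require Rstruct complex.

Module LA.
Import all_boot all_order all_algebra Rstruct complex.
Import Order.TTheory GRing.Theory Num.Theory.
Local Open Scope ring_scope.
Local Notation RR := Rdefinitions.R.
Local Notation normc := ComplexField.Normc.normc.
Local Notation cRe := (@complex.Re RR).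
Local Notation cIm := (@complex.Im RR).

Section Mx.
Variable n : nat.
Variables M N : 'M[RR]_n.+1.
Hypothesis MN : M *m N = 1%:M.
Hypothesis Hexp : forall (a b : RR) (u w : 'rV[RR]_n.+1), (u != 0) \/ (w != 0) ->
   u *m N = a *: u - b *: w -> w *m N = b *: u + a *: w -> 1 < a ^+ 2 + b ^+ 2.

Local Notation C := (RR[i]).
Local Notation toC := (real_complex RR).
Let Mc := map_mx toC M.
Let Nc := map_mx toC N.

Lemma McNc : Mc *m Nc = 1%:M.
Proof. by rewrite /Mc /Nc -map_mxM MN map_mx1. Qed.

Lemma Re_lin (x y : RR) (s : C) : cRe (s * (toC x + Complex 0 1 * toC y)) = cRe s * x - cIm s * y.
Proof. by case: s => a b /=; simpc. Qed.

Lemma Im_lin (x y : RR) (s : C) : cIm (s * (toC x + Complex 0 1 * toC y)) = cIm s * x + cRe s * y.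
Proof. by case: s => a b /=; simpc; rewrite addrC. Qed.

Lemma Re_lin1 (x y : RR) : cRe (toC x + Complex 0 1 * toC y) = x.
Proof. by rewrite /=; simpc. Qed.
Lemma Im_lin1 (x y : RR) : cIm (toC x + Complex 0 1 * toC y) = y.
Proof. by rewrite /=; simpc. Qed.


Lemma split_eq (X Y X' Y' : 'M[RR]_(1, n.+1)) :
  map_mx toC X + Complex 0 1 *: map_mx toC Y = map_mx toC X' + Complex 0 1 *: map_mx toC Y' ->
  X = X' /\ Y = Y'.
Proof.
move=> H; split; apply/matrixP=> i j.
  by have := congr1 (fun A : 'M_(1, n.+1) => cRe (A i j)) H; rewrite !mxE /=; simpc.
by have := congr1 (fun A : 'M_(1, n.+1) => cIm (A i j)) H; rewrite !mxE /=; simpc.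
Qed.

Lemma scale_split (s : C) (X Y : 'M[RR]_(1, n.+1)) :
  s *: (map_mx toC X + Complex 0 1 *: map_mx toC Y) =
  map_mx toC (cRe s *: X - cIm s *: Y) + Complex 0 1 *: map_mx toC (cIm s *: X + cRe s *: Y).
Proof.
apply/matrixP => i j; rewrite !mxE; case: s => a b /=; simpc.
by congr (_ +i* _)%C; rewrite addrC.
Qed.

Lemma eig_small (r : C) : root (char_poly Mc) r -> normc r < 1.
Proof.
rewrite -eigenvalue_root_char => /eigenvalueP [z Hz z0].
have HzMN : z *m Mc *m Nc = z by rewrite -mulmxA McNc mulmx1.
have r0 : r != 0.
  apply: contraNneq z0 => r0.
  by rewrite -HzMN Hz r0 scale0r mul0mx.
have HzN : z *m Nc = r^-1 *: z.
  by rewrite -{2}HzMN Hz -scalemxAl scalerA mulVf // scale1r.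
set s := r^-1 in HzN.
set u := map_mx cRe z. set w := map_mx cIm z.
have Hz' : z = map_mx toC u + Complex 0 1 *: map_mx toC w.
  apply/matrixP => i j; rewrite !mxE. by case: (z i j) => a b /=; simpc.
have HzN2 : z *m Nc = map_mx toC (u *m N) + Complex 0 1 *: map_mx toC (w *m N).
  by rewrite {1}Hz' mulmxDl -scalemxAl /Nc !map_mxM.
move: HzN; rewrite HzN2 Hz' scale_split => /split_eq [Eu Ew].
have uw0 : (u != 0) \/ (w != 0).
  case: (eqVneq u 0) => [u0|]; last by left.
  case: (eqVneq w 0) => [w0|]; last by right.
  by move: z0; rewrite Hz' u0 w0 !map_mx0 scaler0 addr0 eqxx.
have H1 := Hexp _ _ _ _ uw0 Eu Ew.
have Hs : 1 < normc s.
  have -> : normc s = Num.sqrt (cRe s ^+ 2 + cIm s ^+ 2) by case: (s).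
  by rewrite -sqrtr1 ltr_sqrt // (lt_trans ltr01 H1).
have -> : r = s^-1 by rewrite invrK.
rewrite ComplexField.Normc.normcV invf_lt1 //.
exact: lt_trans ltr01 Hs.
Qed.

Definition conv (g : nat -> C) := forall e : RR, 0 < e -> exists N0, forall m, (N0 <= m)%N -> normc (g m) < e.

Lemma normc_ge0 (x : C) : 0 <= normc x.
Proof. by case: x => a b; exact: sqrtr_ge0. Qed.

Lemma decay_C (g h : nat -> C) (r : C) : normc r < 1 ->
  (forall m, g m.+1 = r * g m + h m) -> conv h -> conv g.
Proof.
move=> Hr Hg Hh e e0.
have [|||||N0 HN0] := scal_decay (fun m => normc (g m)) (fun m => normc (h m)) (normc r) _ _ _ _ e _.
- split; [apply/RleP; exact: normc_ge0 | apply/RltP; exact: Hr].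
- by move=> m; apply/RleP; exact: normc_ge0.
- move=> m; apply/RleP; rewrite Hg.
  apply: le_trans (complex.le_normcD _ _) _.
  by rewrite ComplexField.Normc.normcM.
- move=> e' /RltP e'0; have [N1 HN1] := Hh e' e'0.
  by exists N1 => m /ssrnat.leP Hm; apply/RltP; exact: HN1.
- by apply/RltP.
- by exists N0 => m Hm; apply/RltP; apply: HN0; apply/ssrnat.leP.
Qed.

Lemma conv_ext (g g' : nat -> C) : (forall m, g m = g' m) -> conv g -> conv g'.
Proof. move=> E H e e0; have [N0 HN] := H e e0; exists N0 => m Hm; rewrite -E; exact: HN. Qed.

Lemma decay_prod (l : seq C) : (forall r, r \in l -> normc r < 1) ->
  forall (y : 'rV[C]_n.+1) (j : 'I_n.+1),
   conv (fun m => (y *m Mc ^+ m *m horner_mx Mc (\prod_(z <- l) ('X - z%:P))) 0 j) ->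
   conv (fun m => (y *m Mc ^+ m) 0 j).
Proof.
elim: l => [|r l IH] Hl y j Hy.
  apply: conv_ext Hy => m; by rewrite big_nil rmorph1 mulmx1.
apply: (IH _ y j).
  by move=> z zl; apply: Hl; rewrite in_cons zl orbT.
set Q := horner_mx Mc (\prod_(z <- l) ('X - z%:P)).
have Hr : normc r < 1 by apply: Hl; rewrite mem_head.
apply: (decay_C _ _ _ Hr _ Hy).
move=> m /=.
rewrite big_cons rmorphM /= rmorphB /= horner_mx_X horner_mx_C -/Q.
rewrite -mulmxE mulmxA mulmxBr mulmxBl mul_mx_scalar -scalemxAl exprSr mulmxA.
rewrite !mxE.
by rewrite addrCA subrr addr0.
Qed.

Lemma decay_all (y : 'rV[C]_n.+1) (j : 'I_n.+1) : conv (fun m => (y *m Mc ^+ m) 0 j).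
Proof.
have [rs Hrs] := closed_field_poly_normal (char_poly Mc).
have lc : lead_coef (char_poly Mc) = 1 by apply/monicP; exact: char_poly_monic.
rewrite lc scale1r in Hrs.
apply: (decay_prod rs).
  by move=> r rin; apply: eig_small; rewrite Hrs root_prod_XsubC.
rewrite -Hrs Cayley_Hamilton.
move=> e e0; exists 0%N => m _.
rewrite mulmx0 mxE.
have -> : normc (0 : C) = 0 by exact: ComplexField.Normc.normc0.
exact: e0.
Qed.

Lemma mapX (m : nat) : map_mx toC (M ^+ m) = Mc ^+ m.
Proof.
elim: m => [|m IH]; first by rewrite !expr0 map_mx1.
by rewrite !exprS -!mulmxE map_mxM IH.
Qed.

Lemma normc_real (x : RR) : normc (toC x) = `|x|.
Proof. by rewrite /= expr0n /= addr0 sqrtr_sqr. Qed.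

Lemma decay_real (v : 'rV[RR]_n.+1) (j : 'I_n.+1) (e : RR) : 0 < e ->
  exists N0, forall m, (N0 <= m)%N -> `|(v *m M ^+ m) 0 j| < e.
Proof.
move=> e0; have [N0 HN] := decay_all (map_mx toC v) j e e0.
exists N0 => m Hm; have := HN m Hm.
by rewrite -mapX -map_mxM mxE normc_real.
Qed.

Lemma unit_1M (k : nat) : (0 < k)%N -> (1%:M - M ^+ k) \in unitmx.
Proof.
move=> k0; rewrite unitmxE unitfE; apply/negP => /det0P [v v0 Hv].
have Hv' : v = v *m M ^+ k.
  by move/eqP: Hv; rewrite mulmxBr mulmx1 subr_eq0 => /eqP.
have Hvm : forall q, v = v *m M ^+ (k * q).
  elim=> [|q IH]; first by rewrite muln0 expr0 mulmx1.
  by rewrite mulnS exprD -mulmxE mulmxA -Hv'.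
move/negP: v0; apply; apply/eqP/rowP => j; rewrite mxE.
apply/eqP; apply/negP => /negP vj0.
have vpos : 0 < `|v 0 j| by rewrite normr_gt0.
have [N0 HN0] := decay_real v j _ vpos.
have := HN0 (k * N0)%N; rewrite -Hvm ltxx => H; have := H (leq_pmull _ k0); done.
Qed.
Lemma entry_decay (e : RR) : 0 < e -> exists N0, forall m, (N0 <= m)%N -> forall j i, `|(M ^+ m) j i| < e.
Proof.
move=> e0.
have H : forall ji : 'I_n.+1 * 'I_n.+1, exists N0, forall m, (N0 <= m)%N -> `|(M ^+ m) ji.1 ji.2| < e.
  move=> [j i]; have [N0 HN] := decay_real (delta_mx 0 j) i _ e0.
  by exists N0 => m Hm; have := HN m Hm; rewrite -rowE mxE.
have [f Hf] := fin_all_exists H.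
exists (\max_(ji : 'I_n.+1 * 'I_n.+1) f ji) => m Hm j i.
apply: (Hf (j, i)); apply: leq_trans Hm; exact: (@leq_bigmax _ f (j,i)).
Qed.
End Mx.

Definition of_ord {d} (i : 'I_d) : Fin.t d := Fin.of_nat_lt (elimT ssrnat.ltP (ltn_ord i)).
Definition to_ord {d} (f : Fin.t d) : 'I_d := Ordinal (introT ssrnat.ltP (proj2_sig (Fin.to_nat f))).

Lemma of_ord_val d (i : 'I_d) : proj1_sig (Fin.to_nat (of_ord i)) = i.
Proof. by rewrite /of_ord Fin.to_nat_of_nat. Qed.

Lemma of_to_ord d (f : Fin.t d) : of_ord (to_ord f) = f.
Proof. by apply: Fin.to_nat_inj; rewrite of_ord_val. Qed.

Lemma to_of_ord d (i : 'I_d) : to_ord (of_ord i) = i.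
Proof. by apply: val_inj; rewrite /= of_ord_val. Qed.

Lemma fin_sum_big d (f : Fin.t d -> RR) : fin_sum d f = \sum_(i < d) f (of_ord i).
Proof.
elim: d f => [|d IH] f; first by rewrite big_ord0.
rewrite big_ord_recl /= IH.
have -> : of_ord (@ord0 d) = Fin.F1 by apply: Fin.to_nat_inj; rewrite of_ord_val.
have E : forall i : 'I_d, of_ord (lift ord0 i) = Fin.FS (of_ord i).
  move=> i; apply: Fin.to_nat_inj; rewrite of_ord_val.
  have H := Fin.R_sanity 1 (of_ord i); rewrite of_ord_val in H.
  exact: (esym H).
by under [in RHS]eq_bigr => i _ do rewrite E.
Qed.

Definition Mx {d} (A : Mat d) : 'M[RR]_d := \matrix_(i, j) A (of_ord j) (of_ord i).
Definition rv {d} (x : Vec d) : 'rV[RR]_d := \row_j x (of_ord j).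
Definition vc {d} (v : 'rV[RR]_d) : Vec d := fun f => v 0 (to_ord f).

Lemma rv_mv d (A : Mat d) x : rv (mv A x) = rv x *m Mx A.
Proof.
apply/rowP => j; rewrite !mxE /mv fin_sum_big.
by apply: eq_bigr => i _; rewrite !mxE mulrC.
Qed.

Lemma rv_vc d (v : 'rV[RR]_d) : rv (vc v) = v.
Proof. by apply/rowP => j; rewrite !mxE /vc to_of_ord. Qed.

Lemma vc_rv d (x : Vec d) : vc (rv x) = x.
Proof. by apply: FunctionalExtensionality.functional_extensionality => f; rewrite /vc mxE of_to_ord. Qed.

Lemma rv_inj d (x y : Vec d) : rv x = rv y -> x = y.
Proof. by move=> H; rewrite -(vc_rv _ x) H vc_rv. Qed.

Lemma rv_iter d (A : Mat d) m x : rv (Nat.iter m (mv A) x) = rv x *m Mx A ^+ m.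
Proof.
elim: m => [|m IH]; first by rewrite expr0 mulmx1.
by rewrite /= rv_mv IH exprSr -mulmxE mulmxA.
Qed.


Lemma LA_hyps n (Rm Rinv : Mat n.+1) : expansive Rm -> (forall x, mv Rm (mv Rinv x) = x) ->
  Mx Rinv *m Mx Rm = 1%:M /\
  (forall (a b : RR) (u w : 'rV[RR]_n.+1), (u != 0) \/ (w != 0) ->
   u *m Mx Rm = a *: u - b *: w -> w *m Mx Rm = b *: u + a *: w -> 1 < a ^+ 2 + b ^+ 2).
Proof.
move=> Hexp Hinv; split.
  apply/row_matrixP => i; rewrite !rowE mulmxA mulmx1.
  by rewrite -(rv_vc _ (delta_mx 0 i)) -!rv_mv Hinv.
move=> a b u w uw Eu Ew.
have nz : forall v : 'rV[RR]_n.+1, v != 0 -> exists j, v 0 j != 0.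
  move=> v v0; have : ~~ [forall j, v 0 j == 0].
    apply: contra v0 => /forallP H; apply/eqP/rowP => j; rewrite mxE; exact/eqP.
  by move/forallPn.
have h1 : exists i, vc u i <> 0 \/ vc w i <> 0.
  case: uw => [/nz [j uj]|/nz [j wj]]; exists (of_ord j); [left|right];
  rewrite /vc to_of_ord; exact/eqP.
have h2 : mv Rm (vc u) = (fun i => Rminus (Rmult a (vc u i)) (Rmult b (vc w i))).
  apply: rv_inj; rewrite rv_mv rv_vc Eu; apply/rowP => j; rewrite !mxE /vc !to_of_ord //.
have h3 : mv Rm (vc w) = (fun i => Rplus (Rmult b (vc u i)) (Rmult a (vc w i))).
  apply: rv_inj; rewrite rv_mv rv_vc Ew; apply/rowP => j; rewrite !mxE /vc !to_of_ord //.
have H := Hexp a b (vc u) (vc w) h1 h2 h3.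
by move/RltP: H; rewrite !expr2.
Qed.

Lemma LA_decay d (Rm Rinv : Mat d) : expansive Rm -> (forall x, mv Rm (mv Rinv x) = x) ->
  forall (x : Vec d) (i : Fin.t d) (e : RR), Rlt 0 e ->
  exists N0, forall m, (N0 <= m)%coq_nat -> Rlt (Rabs (Nat.iter m (mv Rinv) x i)) e.
Proof.
case: d Rm Rinv => [|n] Rm Rinv Hexp Hinv x i; first by exfalso; exact: (Fin.case0 (fun _ => False) i).
move=> e /RltP e0.
have [MN Hexp'] := LA_hyps _ _ _ Hexp Hinv.
have [N0 HN0] := decay_real _ _ _ MN Hexp' (rv x) (to_ord i) _ e0.
exists N0 => m /ssrnat.leP Hm; apply/RltP.
have := HN0 m Hm; rewrite -rv_iter mxE of_to_ord //.
Qed.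

Lemma LA_fix d (Rm Rinv : Mat d) : expansive Rm -> (forall x, mv Rm (mv Rinv x) = x) ->
  forall (k : nat) (c : Vec d), (0 < k)%coq_nat ->
  exists y, vadd (Nat.iter k (mv Rinv) y) c = y.
Proof.
case: d Rm Rinv => [|n] Rm Rinv Hexp Hinv k c k0.
  exists c; apply: FunctionalExtensionality.functional_extensionality => i; exfalso; exact: (Fin.case0 (fun _ => False) i).
have [MN Hexp'] := LA_hyps _ _ _ Hexp Hinv.
have U := unit_1M _ _ _ MN Hexp' _ (introT ssrnat.ltP k0).
exists (vc (rv c *m invmx (1%:M - Mx Rinv ^+ k))).
apply: rv_inj.
have -> : rv (vadd (Nat.iter k (mv Rinv) (vc (rv c *m invmx (1%:M - Mx Rinv ^+ k)))) c)
   = rv (Nat.iter k (mv Rinv) (vc (rv c *m invmx (1%:M - Mx Rinv ^+ k)))) + rv c.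
  by apply/rowP => j; rewrite !mxE.
rewrite rv_iter rv_vc.
set y := rv c *m _.
have Hy : y *m (1%:M - Mx Rinv ^+ k) = rv c by rewrite /y -mulmxA mulVmx // mulmx1.
by rewrite -Hy mulmxBr mulmx1 addrC subrK.
Qed.

Definition Ent {d} (A : Mat d) (m : nat) (j i : Fin.t d) : RR := (Mx A ^+ m) (to_ord j) (to_ord i).

Lemma LA_lin d (A : Mat d) m z i : Nat.iter m (mv A) z i = fin_sum d (fun j => Rmult (Ent A m j i) (z j)).
Proof.
have := congr1 (fun v : 'rV[RR]_d => v 0 (to_ord i)) (rv_iter _ A m z).
rewrite mxE of_to_ord => ->; rewrite mxE fin_sum_big.
by apply: eq_bigr => j _; rewrite mxE /Ent to_of_ord mulrC.
Qed.

Lemma LA_entry d (Rm Rinv : Mat d) : expansive Rm -> (forall x, mv Rm (mv Rinv x) = x) ->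
  forall e : RR, Rlt 0 e -> exists N0, forall m, (N0 <= m)%coq_nat ->
  forall j i, Rlt (Rabs (Ent Rinv m j i)) e.
Proof.
case: d Rm Rinv => [|n] Rm Rinv Hexp Hinv e.
  by move=> _; exists 0%N => m _ j; exfalso; exact: (Fin.case0 (fun _ => False) j).
move=> /RltP e0.
have [MN Hexp'] := LA_hyps _ _ _ Hexp Hinv.
have [N0 HN0] := entry_decay _ _ _ MN Hexp' _ e0.
by exists N0 => m /ssrnat.leP Hm j i; apply/RltP; exact: HN0.
Qed.
End LA.

From Stdlib Require Import Reals Lra Lia List Classical ClassicalEpsilon FunctionalExtensionality PropExtensionality.
Import ListNotations.
Open Scope R_scope.

Lemma fs_ext d (f g : Fin.t d -> R) : (forall i, f i = g i) -> fin_sum d f = fin_sum d g.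
Proof.
  induction d; intros H; simpl; auto.
  rewrite H, (IHd (fun i => f (Fin.FS i)) (fun i => g (Fin.FS i))); auto.
Qed.

Lemma fs_add d (f g : Fin.t d -> R) : fin_sum d (fun i => f i + g i) = fin_sum d f + fin_sum d g.
Proof.
  induction d; simpl. lra.
  rewrite (IHd (fun i => f (Fin.FS i)) (fun i => g (Fin.FS i))). lra.
Qed.

Lemma fs_scal d (c : R) (f : Fin.t d -> R) : fin_sum d (fun i => c * f i) = c * fin_sum d f.
Proof.
  induction d; simpl. lra.
  rewrite (IHd (fun i => f (Fin.FS i))). lra.
Qed.

Lemma fs_opp d (f : Fin.t d -> R) : fin_sum d (fun i => - f i) = - fin_sum d f.
Proof.
  induction d; simpl. lra.
  rewrite (IHd (fun i => f (Fin.FS i))). lra.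
Qed.

Lemma fs_le d (f g : Fin.t d -> R) : (forall i, f i <= g i) -> fin_sum d f <= fin_sum d g.
Proof.
  induction d; intros H; simpl. lra.
  pose proof (IHd (fun i => f (Fin.FS i)) (fun i => g (Fin.FS i)) (fun i => H _)).
  pose proof (H Fin.F1). lra.
Qed.

Lemma fs_nonneg d (f : Fin.t d -> R) : (forall i, 0 <= f i) -> 0 <= fin_sum d f.
Proof.
  intros H. replace 0 with (fin_sum d (fun _ => 0)).
  - apply fs_le; intros; apply H.
  - clear H f. induction d; simpl; auto. rewrite IHd. lra.
Qed.

Lemma fs_const d (c : R) : fin_sum d (fun _ => c) = INR d * c.
Proof.
  induction d; simpl. lra.
  rewrite IHd. destruct d; simpl; lra.
Qed.

Lemma fs_term d (f : Fin.t d -> R) i : (forall i, 0 <= f i) -> f i <= fin_sum d f.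
Proof.
  induction d.
  - exfalso; exact (Fin.case0 (fun _ => False) i).
  - intros H. simpl.
    pose proof (fs_nonneg d (fun i => f (Fin.FS i)) (fun i => H _)).
    revert f H H0. pattern i. apply Fin.caseS'.
    + intros. lra.
    + intros j f H H0. pose proof (IHd (fun i => f (Fin.FS i)) j (fun i => H _)). pose proof (H Fin.F1). lra.
Qed.

Lemma fs_abs d (f : Fin.t d -> R) : Rabs (fin_sum d f) <= fin_sum d (fun i => Rabs (f i)).
Proof.
  induction d; simpl.
  - rewrite Rabs_R0. lra.
  - eapply Rle_trans. apply Rabs_triang.
    pose proof (IHd (fun i => f (Fin.FS i))). lra.
Qed.

Lemma fs_sq d (w : Fin.t d -> R) :
  fin_sum d (fun i => w i * w i) <= fin_sum d (fun i => Rabs (w i)) * fin_sum d (fun i => Rabs (w i)).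
Proof.
  induction d; simpl. lra.
  pose proof (IHd (fun i => w (Fin.FS i))) as H.
  pose proof (fs_nonneg d (fun i => Rabs (w (Fin.FS i))) (fun i => Rabs_pos _)) as H0.
  pose proof (Rabs_pos (w Fin.F1)).
  assert (w Fin.F1 * w Fin.F1 = Rabs (w Fin.F1) * Rabs (w Fin.F1)).
  { rewrite <- Rabs_mult. rewrite Rabs_right; [lra|]. apply Rle_ge, Rle_0_sqr. }
  nra.
Qed.

Definition vsub {d} (x y : Vec d) : Vec d := fun i => x i - y i.
Definition nrm {d} (x : Vec d) : R := fin_sum d (fun i => Rabs (x i)).

Lemma nrm_nonneg d (x : Vec d) : 0 <= nrm x.
Proof. apply fs_nonneg. intros; apply Rabs_pos. Qed.

Lemma coord_le_nrm d (x : Vec d) i : Rabs (x i) <= nrm x.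
Proof. apply (fs_term d (fun i => Rabs (x i))). intros; apply Rabs_pos. Qed.

Lemma nrm_triang d (x y z : Vec d) : nrm (vsub x z) <= nrm (vsub x y) + nrm (vsub y z).
Proof.
  unfold nrm, vsub. rewrite <- fs_add. apply fs_le. intros i.
  replace (x i - z i) with ((x i - y i) + (y i - z i)) by ring. apply Rabs_triang.
Qed.

Lemma nrm_sym d (x y : Vec d) : nrm (vsub x y) = nrm (vsub y x).
Proof. unfold nrm, vsub. apply fs_ext. intros; apply Rabs_minus_sym. Qed.

Lemma nrm_sub0 d (x : Vec d) : nrm (vsub x (fun _ => 0)) = nrm x.
Proof. unfold nrm, vsub. apply fs_ext. intros; f_equal; ring. Qed.

Lemma coord_le_vnorm d (x : Vec d) i : Rabs (x i) <= vnorm x.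
Proof.
  unfold vnorm. rewrite <- sqrt_Rsqr_abs. apply sqrt_le_1_alt.
  apply (fs_term d (fun i => x i * x i)). intros; apply Rle_0_sqr.
Qed.

Lemma vnorm_le_nrm d (x : Vec d) : vnorm x <= nrm x.
Proof.
  unfold vnorm. rewrite <- (sqrt_square (nrm x)) by apply nrm_nonneg.
  apply sqrt_le_1_alt. apply fs_sq.
Qed.

Lemma nrm_le_vnorm d (x : Vec d) : nrm x <= INR d * vnorm x.
Proof.
  unfold nrm. rewrite <- fs_const. apply fs_le. intros; apply coord_le_vnorm.
Qed.

Lemma mv_sub d (A : Mat d) (x y : Vec d) : vsub (mv A x) (mv A y) = mv A (vsub x y).
Proof.
  apply functional_extensionality. intros i. unfold vsub, mv.
  unfold Rminus. rewrite <- fs_opp, <- fs_add. apply fs_ext. intros; ring.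
Qed.

Definition KA {d} (A : Mat d) : R := fin_sum d (fun i => fin_sum d (fun j => Rabs (A i j))).

Lemma KA_nonneg d (A : Mat d) : 0 <= KA A.
Proof. apply fs_nonneg; intros; apply fs_nonneg; intros; apply Rabs_pos. Qed.

Lemma mv_lip d (A : Mat d) (z : Vec d) : nrm (mv A z) <= KA A * nrm z.
Proof.
  unfold nrm at 1, KA. rewrite Rmult_comm, <- (fs_scal d (nrm z)). apply fs_le. intros i.
  unfold mv. eapply Rle_trans. apply fs_abs.
  rewrite <- fs_scal. apply fs_le. intros j.
  rewrite Rabs_mult, (Rmult_comm (nrm z)). apply Rmult_le_compat_l. apply Rabs_pos. apply coord_le_nrm.
Qed.

Definition lip {d} (f : Vec d -> Vec d) : Prop :=
  exists K, 0 <= K /\ forall x y, nrm (vsub (f x) (f y)) <= K * nrm (vsub x y).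

Lemma lip_id d : lip (fun x : Vec d => x).
Proof. exists 1. split. lra. intros; lra. Qed.

Lemma lip_comp d (f g : Vec d -> Vec d) : lip f -> lip g -> lip (fun x => f (g x)).
Proof.
  intros [K1 [H1 H1']] [K2 [H2 H2']]. exists (K1 * K2). split. nra.
  intros x y. eapply Rle_trans. apply H1'. rewrite Rmult_assoc.
  apply Rmult_le_compat_l; auto.
Qed.

Lemma lip_iter d (f : Vec d -> Vec d) n : lip f -> lip (Nat.iter n f).
Proof.
  intros H. induction n; simpl.
  - apply lip_id.
  - apply (lip_comp d f (Nat.iter n f)); auto.
Qed.

Definition cont {d} (f : Vec d -> Vec d) : Prop :=
  forall U, is_open U -> is_open (preimage f U).

Lemma vdist_le_nrm d (x y : Vec d) : vdist x y <= nrm (vsub x y).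
Proof. apply vnorm_le_nrm. Qed.

Lemma nrm_le_vdist d (x y : Vec d) : nrm (vsub x y) <= INR d * vdist x y.
Proof. apply nrm_le_vnorm. Qed.

Lemma vdist_nonneg d (x y : Vec d) : 0 <= vdist x y.
Proof. unfold vdist, vnorm. apply sqrt_pos. Qed.

Lemma cont_lip d (f : Vec d -> Vec d) : lip f -> cont f.
Proof.
  intros [K [HK Hf]] U HU x Hx.
  destruct (HU (f x) Hx) as [eps [Heps HU']].
  assert (HD : 0 <= INR d) by apply pos_INR.
  exists (eps / (K * INR d + 1)). split.
  { apply Rdiv_lt_0_compat; nra. }
  intros y Hy. apply HU'. unfold preimage.
  eapply Rle_lt_trans. apply vdist_le_nrm.
  eapply Rle_lt_trans. apply Hf.
  eapply Rle_lt_trans. apply Rmult_le_compat_l; [exact HK| apply nrm_le_vdist].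
  assert (H0 := vdist_nonneg d x y).
  assert (Hq : vdist x y * (K * INR d + 1) < eps).
  { apply Rmult_lt_reg_r with (/ (K * INR d + 1)). apply Rinv_0_lt_compat; nra.
    rewrite Rmult_assoc, Rinv_r by nra. rewrite Rmult_1_r. exact Hy. }
  nra.
Qed.

Lemma cont_comp d (f g : Vec d -> Vec d) : cont f -> cont g -> cont (fun x => f (g x)).
Proof. intros Hf Hg U HU. apply (Hg _ (Hf U HU)). Qed.

Lemma set_ext d (A B : set d) : (forall x, A x <-> B x) -> A = B.
Proof.
  intros H. apply functional_extensionality. intros x.
  apply propositional_extensionality. apply H.
Qed.

Lemma nrm_zero_eq d (x y : Vec d) : nrm (vsub x y) = 0 -> x = y.
Proof.
  intros H. apply functional_extensionality. intros i.
  pose proof (coord_le_nrm d (vsub x y) i). pose proof (Rabs_pos (vsub x y i)).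
  unfold vsub in *. assert (Rabs (x i - y i) = 0) by lra.
  apply Rminus_diag_uniq. destruct (Req_dec (x i - y i) 0) as [E|E]; auto. exfalso. apply Rabs_no_R0 in E. contradiction.
Qed.

Lemma compact_image d (f : Vec d -> Vec d) (K : set d) :
  cont f -> is_compact K -> is_compact (image f K).
Proof.
  intros Hf HK I U HU Hcov.
  destruct (HK I (fun i => preimage f (U i)) (fun i => Hf _ (HU i))) as [l Hl].
  - intros x Kx. destruct (Hcov (f x) (ex_intro _ x (conj Kx eq_refl))) as [i Hi].
    exists i; exact Hi.
  - exists l. intros x [y [Ky Hxy]]. subst x. destruct (Hl y Ky) as [i [Hin Hi]].
    exists i; split; auto.
Qed.

Lemma open_far d (x : Vec d) (r : R) : is_open (fun y => r < nrm (vsub y x)).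
Proof.
  intros y Hy.
  assert (HD : 0 <= INR d) by apply pos_INR.
  exists ((nrm (vsub y x) - r) / (INR d + 1)). split.
  { apply Rdiv_lt_0_compat; lra. }
  intros z Hz.
  pose proof (nrm_triang d y z x). pose proof (nrm_le_vdist d y z).
  pose proof (vdist_nonneg d y z).
  assert (Hq : vdist y z * (INR d + 1) < nrm (vsub y x) - r).
  { apply Rmult_lt_reg_r with (/ (INR d + 1)). apply Rinv_0_lt_compat; lra.
    rewrite Rmult_assoc, Rinv_r by lra. rewrite Rmult_1_r. exact Hz. }
  nra.
Qed.

Lemma compact_sep d (K : set d) (x : Vec d) :
  is_compact K -> ~ K x -> exists eps, 0 < eps /\ forall y, K y -> eps <= nrm (vsub y x).
Proof.
  intros HK Hx.
  destruct (HK nat (fun m y => / INR (S m) < nrm (vsub y x)) (fun m => open_far d x _)) as [l Hl].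
  - intros y Ky.
    assert (Hpos : 0 < nrm (vsub y x)).
    { destruct (Rle_lt_or_eq_dec 0 _ (nrm_nonneg d (vsub y x))) as [H|H]; auto.
      exfalso. apply Hx. rewrite <- (nrm_zero_eq d y x); auto. }
    destruct (archimed_cor1 _ Hpos) as [N0 [HN0 HN0']].
    exists (Nat.pred N0). replace (S (Nat.pred N0)) with N0 by lia. exact HN0.
  - exists (/ INR (S (list_max l))). split.
    { apply Rinv_0_lt_compat. apply lt_0_INR. lia. }
    intros y Ky. destruct (Hl y Ky) as [m [Hm Hy]].
    assert (Hle : (m <= list_max l)%nat).
    { pose proof (proj1 (list_max_le l (list_max l)) (Nat.le_refl _)) as HF.
      rewrite Forall_forall in HF. apply HF; auto. }
    left. eapply Rle_lt_trans; [|exact Hy].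
    apply Rinv_le_contravar. apply lt_0_INR; lia. apply le_INR; lia.
Qed.

Lemma open_ball0 d (r : R) : is_open (fun y : Vec d => nrm y < r).
Proof.
  intros y Hy.
  assert (HD : 0 <= INR d) by apply pos_INR.
  exists ((r - nrm y) / (INR d + 1)). split.
  { apply Rdiv_lt_0_compat; lra. }
  intros z Hz.
  pose proof (nrm_triang d z y (fun _ => 0)). rewrite !nrm_sub0 in H.
  pose proof (nrm_le_vdist d y z). rewrite nrm_sym in H0.
  pose proof (vdist_nonneg d y z).
  assert (Hq : vdist y z * (INR d + 1) < r - nrm y).
  { apply Rmult_lt_reg_r with (/ (INR d + 1)). apply Rinv_0_lt_compat; lra.
    rewrite Rmult_assoc, Rinv_r by lra. rewrite Rmult_1_r. exact Hz. }
  nra.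
Qed.

Lemma compact_bounded d (K : set d) : is_compact K -> exists B, forall y, K y -> nrm y <= B.
Proof.
  intros HK.
  destruct (HK nat (fun m y => nrm y < INR m) (fun m => open_ball0 d _)) as [l Hl].
  - intros y Ky. destruct (INR_unbounded (nrm y)) as [m Hm]. exists m. lra.
  - exists (INR (list_max l)). intros y Ky. destruct (Hl y Ky) as [m [Hm Hy]].
    assert (Hle : (m <= list_max l)%nat).
    { pose proof (proj1 (list_max_le l (list_max l)) (Nat.le_refl _)) as HF.
      rewrite Forall_forall in HF. apply HF; auto. }
    apply le_INR in Hle. lra.
Qed.

Lemma compact_closed_compl d (K : set d) : is_compact K -> is_open (fun x => ~ K x).
Proof.
  intros HK x Hx. destruct (compact_sep d K x HK Hx) as [eps [Heps H]].
  assert (HD : 0 <= INR d) by apply pos_INR.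
  exists (eps / (INR d + 1)). split. apply Rdiv_lt_0_compat; lra.
  intros y Hy Ky. pose proof (H y Ky).
  pose proof (nrm_le_vdist d x y). rewrite nrm_sym in H1.
  pose proof (vdist_nonneg d x y).
  assert (Hq : vdist x y * (INR d + 1) < eps).
  { apply Rmult_lt_reg_r with (/ (INR d + 1)). apply Rinv_0_lt_compat; lra.
    rewrite Rmult_assoc, Rinv_r by lra. rewrite Rmult_1_r. exact Hy. }
  nra.
Qed.

Lemma borel_nn d (A : set d) : borel (fun x => ~ ~ A x) -> borel A.
Proof.
  intros H. replace A with (fun x => ~ ~ A x); auto.
  apply set_ext. intros x. split; [apply NNPP | auto].
Qed.

Lemma compact_borel d (K : set d) : is_compact K -> borel K.
Proof.
  intros HK. apply borel_nn. apply borel_compl. apply borel_open.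
  now apply compact_closed_compl.
Qed.

Lemma borel_preimage d (f : Vec d -> Vec d) (A : set d) : cont f -> borel A -> borel (preimage f A).
Proof.
  intros Hf HA. induction HA.
  - apply borel_open. now apply Hf.
  - apply (borel_compl (preimage f A)). auto.
  - apply (borel_union (fun n => preimage f (A n))). auto.
Qed.

Lemma borel_empty d : borel (fun _ : Vec d => False).
Proof. apply borel_open. intros x []. Qed.

Lemma borel_U2 d (A B : set d) : borel A -> borel B -> borel (fun x => A x \/ B x).
Proof.
  intros HA HB.
  replace (fun x => A x \/ B x) with (fun x => exists n, (match n with 0 => A | _ => B end) x).
  - apply borel_union. intros [|n]; auto.
  - apply set_ext. intros x. split.
    + intros [[|n] H]; auto.
    + intros [H|H]; [exists 0%nat | exists 1%nat]; auto.
Qed.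

Lemma borel_I2 d (A B : set d) : borel A -> borel B -> borel (fun x => A x /\ B x).
Proof.
  intros HA HB.
  replace (fun x => A x /\ B x) with (fun x => ~ (~ A x \/ ~ B x)).
  - apply borel_compl. apply borel_U2; apply borel_compl; auto.
  - apply set_ext. intros x. split.
    + intros H. split; apply NNPP; intros H'; apply H; auto.
    + intros [H1 H2] [H|H]; auto.
Qed.

Section Measure.
Variable d : nat.
Variable mu : set d -> R.
Hypothesis Hmu : is_prob_measure mu.

Lemma mu_nonneg A : borel A -> 0 <= mu A.
Proof. apply (proj1 Hmu). Qed.

Lemma mu_empty : mu (fun _ => False) = 0.
Proof. apply (proj1 (proj2 Hmu)). Qed.

Lemma mu_full : mu (fun _ => True) = 1.
Proof. apply (proj1 (proj2 (proj2 Hmu))). Qed.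

Lemma mu_add2 (A B : set d) : borel A -> borel B -> (forall x, A x -> B x -> False) ->
  mu (fun x => A x \/ B x) = mu A + mu B.
Proof.
  intros HA HB Hdis.
  set (Sq := fun n => match n with 0 => A | 1 => B | _ => (fun _ : Vec d => False) end).
  assert (HS : forall n, borel (Sq n)).
  { intros [|[|n]]; simpl; auto. apply borel_empty. }
  assert (Hdj : forall m n x, m <> n -> Sq m x -> Sq n x -> False).
  { intros [|[|m]] [|[|n]] x Hmn; simpl; try tauto; try lia.
    - intros; eapply Hdis; eauto.
    - intros; eapply Hdis; eauto. }
  pose proof (proj2 (proj2 (proj2 Hmu)) Sq HS Hdj) as Hsum.
  replace (fun x => exists n, Sq n x) with (fun x => A x \/ B x) in Hsum.
  2: { apply set_ext. intros x. split.
       - intros [H|H]; [exists 0%nat | exists 1%nat]; auto.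
       - intros [[|[|n]] H]; simpl in H; tauto. }
  apply (uniqueness_sum (fun n => mu (Sq n))); auto.
  intros eps Heps. exists 1%nat. intros n Hn.
  assert (E : forall m, sum_f_R0 (fun n => mu (Sq n)) (S m) = mu A + mu B).
  { induction m. simpl. lra. simpl. simpl in IHm. rewrite IHm. rewrite mu_empty. lra. }
  destruct n. lia. rewrite E. unfold R_dist. rewrite Rminus_diag, Rabs_R0. lra.
Qed.

Lemma mu_mono (A B : set d) : borel A -> borel B -> (forall x, A x -> B x) -> mu A <= mu B.
Proof.
  intros HA HB Hsub.
  assert (E : B = (fun x => A x \/ (B x /\ ~ A x))).
  { apply set_ext. intros x. split.
    - intros Hx. destruct (classic (A x)); auto.
    - intros [H|[H _]]; auto. }
  rewrite E. rewrite mu_add2; auto.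
  - pose proof (mu_nonneg (fun x => B x /\ ~ A x) (borel_I2 d _ _ HB (borel_compl _ HA))). lra.
  - apply borel_I2; auto. apply borel_compl; auto.
  - intros x H1 [_ H2]; auto.
Qed.

Lemma mu_compl (A : set d) : borel A -> mu (fun x => ~ A x) = 1 - mu A.
Proof.
  intros HA.
  assert (E : (fun _ : Vec d => True) = (fun x => A x \/ ~ A x)).
  { apply set_ext. intros x. split; auto. intros _. apply classic. }
  pose proof mu_full. rewrite E in H. rewrite mu_add2 in H; auto.
  - lra.
  - apply borel_compl; auto.
Qed.

Lemma mu_zero_sub (A B : set d) : borel A -> borel B -> (forall x, A x -> B x) -> mu B = 0 -> mu A = 0.
Proof.
  intros HA HB Hs H0. pose proof (mu_mono A B HA HB Hs). pose proof (mu_nonneg A HA). lra.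
Qed.
End Measure.

Definition lsum {A : Type} (l : list A) (f : A -> R) : R := fold_right Rplus 0 (map f l).

Lemma lsum_app {A} (l1 l2 : list A) f : lsum (l1 ++ l2) f = lsum l1 f + lsum l2 f.
Proof. induction l1; simpl; unfold lsum in *; simpl; [lra|]. rewrite IHl1. lra. Qed.

Lemma lsum_flat {A B} (l : list A) (g : A -> list B) f :
  lsum (flat_map g l) f = lsum l (fun a => lsum (g a) f).
Proof. induction l; simpl. reflexivity. rewrite lsum_app, IHl. reflexivity. Qed.

Lemma lsum_map {A B} (l : list A) (h : A -> B) f : lsum (map h l) f = lsum l (fun a => f (h a)).
Proof. unfold lsum. rewrite map_map. reflexivity. Qed.

Lemma lsum_scal {A} (l : list A) c f : c * lsum l f = lsum l (fun a => c * f a).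
Proof. induction l; unfold lsum in *; simpl. lra. rewrite <- IHl. lra. Qed.

Lemma lsum_mulr {A} (l : list A) c f : lsum l f * c = lsum l (fun a => f a * c).
Proof. induction l; unfold lsum in *; simpl. lra. rewrite <- IHl. lra. Qed.

Lemma lsum_ext_in {A} (l : list A) f g : (forall a, In a l -> f a = g a) -> lsum l f = lsum l g.
Proof.
  induction l; intros H; unfold lsum in *; simpl; auto.
  rewrite H by (left; auto). rewrite IHl; auto. intros; apply H; right; auto.
Qed.

Lemma lsum_le_in {A} (l : list A) f g : (forall a, In a l -> f a <= g a) -> lsum l f <= lsum l g.
Proof.
  induction l; intros H; unfold lsum in *; simpl. lra.
  pose proof (H a (or_introl eq_refl)). pose proof (IHl (fun x Hx => H x (or_intror Hx))). lra.
Qed.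

Lemma lsum_pos {A} (l : list A) f a0 : (forall a, In a l -> 0 <= f a) -> In a0 l -> 0 < f a0 -> 0 < lsum l f.
Proof.
  induction l; intros H Hin Hpos; simpl in Hin. contradiction.
  assert (0 <= lsum l f).
  { replace 0 with (lsum l (fun _ => 0)). apply lsum_le_in. intros; apply H; right; auto.
    clear. induction l; unfold lsum in *; simpl; auto. rewrite IHl. lra. }
  unfold lsum in *; simpl. destruct Hin as [->|Hin].
  - lra.
  - pose proof (H a (or_introl eq_refl)). pose proof (IHl (fun x Hx => H x (or_intror Hx)) Hin Hpos). lra.
Qed.

Lemma sum_lt_seq N f : sum_lt N f = lsum (seq 0 N) f.
Proof.
  induction N. reflexivity.
  simpl sum_lt. rewrite IHN, seq_S, lsum_app. unfold lsum; simpl. ring.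
Qed.

Lemma words_S N n f : lsum (words N (S n)) f = lsum (seq 0 N) (fun i => lsum (words N n) (fun J => f (i :: J))).
Proof.
  simpl. rewrite lsum_flat. apply lsum_ext_in. intros. apply lsum_map.
Qed.

Lemma words_spec N n I : In I (words N n) <-> length I = n /\ Forall (fun i => (i < N)%nat) I.
Proof.
  revert I. induction n; intros I; simpl.
  - split.
    + intros [<-|[]]. split; auto.
    + intros [H _]. destruct I; simpl in H; try lia. auto.
  - rewrite in_flat_map. split.
    + intros [i [Hi HI]]. apply in_map_iff in HI. destruct HI as [J [<- HJ]].
      apply IHn in HJ. destruct HJ as [HJ1 HJ2]. apply in_seq in Hi.
      simpl. split. lia. constructor; auto. lia.
    + intros [HL HF]. destruct I as [|i J]; simpl in HL. lia.
      inversion HF; subst. exists i. split. apply in_seq. lia.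
      apply in_map. apply IHn. split; auto.
Qed.

Section IFS.
Variables (d : nat) (Rm Rinv : Mat d) (N : nat) (b : nat -> Vec d) (p : nat -> R)
  (X : set d) (mu : set d -> R).
Hypothesis Hexp : expansive Rm.
Hypothesis Hinv1 : forall x, mv Rm (mv Rinv x) = x.
Hypothesis Hinv2 : forall x, mv Rinv (mv Rm x) = x.
Hypothesis Hp : forall i, (i < N)%nat -> 0 < p i.
Hypothesis Hsum : sum_lt N p = 1.
Hypothesis Hatt : is_attractor Rinv N b X.
Hypothesis Hmu : is_prob_measure mu.
Hypothesis Hinvar : is_invariant Rinv N b p mu.

Local Notation L := (mv Rinv).
Local Notation tw := (tau_word Rinv b).

Lemma tau_sub i x y : vsub (tau Rinv b i x) (tau Rinv b i y) = L (vsub x y).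
Proof.
  unfold tau. rewrite mv_sub. f_equal. apply functional_extensionality. intros j.
  unfold vsub, vadd. ring.
Qed.

Lemma tw_sub I x y : vsub (tw I x) (tw I y) = Nat.iter (length I) L (vsub x y).
Proof.
  induction I as [|i J IH]; simpl. reflexivity.
  rewrite tau_sub, IH. reflexivity.
Qed.

Lemma lip_tau i : lip (tau Rinv b i).
Proof.
  exists (KA Rinv). split. apply KA_nonneg. intros x y. rewrite tau_sub. apply mv_lip.
Qed.

Lemma lip_tw I : lip (tw I).
Proof.
  induction I as [|i J IH]; simpl. apply lip_id.
  apply (lip_comp d (tau Rinv b i) (tw J)); auto. apply lip_tau.
Qed.

Lemma cont_tw I : cont (tw I).
Proof. apply cont_lip, lip_tw. Qed.

Lemma cont_tau i : cont (tau Rinv b i).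
Proof. apply cont_lip, lip_tau. Qed.

Lemma iterL_bound n : exists K, 0 <= K /\ forall z, nrm (Nat.iter n L z) <= K * nrm z.
Proof.
  induction n as [|n [K [HK H]]].
  - exists 1. split. lra. intros; simpl; lra.
  - exists (KA Rinv * K). split. pose proof (KA_nonneg d Rinv). nra.
    intros z. simpl. eapply Rle_trans. apply mv_lip. rewrite Rmult_assoc.
    apply Rmult_le_compat_l. apply KA_nonneg. apply H.
Qed.

Lemma tw_in_X I x : Forall (fun i => (i < N)%nat) I -> X x -> X (tw I x).
Proof.
  intros HF Hx. induction HF; simpl; auto.
  destruct Hatt as [_ [_ HX]]. apply HX. exists x0. split; auto. exists (tw l x). auto.
Qed.

Lemma p_word_pos I : Forall (fun i => (i < N)%nat) I -> 0 < p_word p I.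
Proof.
  intros HF. induction HF; simpl. lra. apply Rmult_lt_0_compat; auto.
Qed.

Lemma sum_words_p n : lsum (words N n) (p_word p) = 1.
Proof.
  induction n.
  - unfold lsum; simpl. lra.
  - rewrite words_S. rewrite <- Hsum, sum_lt_seq. apply lsum_ext_in. intros i _.
    simpl. rewrite <- lsum_scal, IHn. ring.
Qed.

Lemma invariance_iter n : forall A, borel A ->
  mu A = lsum (words N n) (fun I => p_word p I * mu (preimage (tw I) A)).
Proof.
  induction n; intros A HA.
  - unfold lsum; simpl. replace (preimage (fun x => x) A) with A by reflexivity. ring.
  - rewrite words_S, (Hinvar A HA), sum_lt_seq. apply lsum_ext_in. intros i _.
    rewrite (IHn (preimage (tau Rinv b i) A)) by (apply borel_preimage; auto; apply cont_tau).
    rewrite lsum_scal. apply lsum_ext_in. intros J _. simpl. unfold preimage. ring.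
Qed.

Lemma unif_decay (eps B : R) : 0 < eps -> exists n0, forall n, (n0 <= n)%nat ->
  forall z, nrm z <= B -> nrm (Nat.iter n L z) < eps.
Proof.
  intros Heps.
  assert (HD : 0 <= INR d) by apply pos_INR.
  set (e' := eps / ((INR d + 1) * (Rabs B + 1))).
  assert (He' : 0 < e').
  { unfold e'. apply Rdiv_lt_0_compat; auto. pose proof (Rabs_pos B). nra. }
  destruct (LA.LA_entry d Rm Rinv Hexp Hinv1 e' He') as [n0 Hn0].
  exists n0. intros n Hn z Hz.
  assert (Hc : forall i, Rabs (Nat.iter n L z i) <= e' * (Rabs B + 1)).
  { intros i. rewrite LA.LA_lin. eapply Rle_trans. apply fs_abs.
    apply Rle_trans with (fin_sum d (fun j => e' * Rabs (z j))).
    - apply fs_le. intros j. rewrite Rabs_mult. apply Rmult_le_compat_r. apply Rabs_pos.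
      left. apply Hn0. exact Hn.
    - rewrite fs_scal. apply Rmult_le_compat_l. lra.
      fold (nrm z). pose proof (Rle_abs B). lra. }
  unfold nrm at 1. eapply Rle_lt_trans. apply (fs_le d _ (fun _ => e' * (Rabs B + 1))). exact Hc.
  rewrite fs_const. unfold e'.
  replace (INR d * (eps / ((INR d + 1) * (Rabs B + 1)) * (Rabs B + 1)))
    with (eps * (INR d / (INR d + 1))).
  2:{ field. pose proof (Rabs_pos B). lra. }
  assert (INR d / (INR d + 1) < 1).
  { apply Rmult_lt_reg_r with (INR d + 1). lra. unfold Rdiv. rewrite Rmult_assoc, Rinv_l by lra. lra. }
  nra.
Qed.

Definition far (delta : R) : set d := fun x => ~ (exists y, X y /\ nrm (vsub x y) < delta).

Lemma borel_far delta : borel (far delta).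
Proof.
  apply borel_compl. apply borel_open. intros x [y [Hy Hxy]].
  assert (HD : 0 <= INR d) by apply pos_INR.
  exists ((delta - nrm (vsub x y)) / (INR d + 1)). split.
  { apply Rdiv_lt_0_compat; lra. }
  intros z Hz. exists y. split; auto.
  pose proof (nrm_triang d z x y). pose proof (nrm_le_vdist d x z). rewrite (nrm_sym d x z) in H0.
  pose proof (vdist_nonneg d x z).
  assert (Hq : vdist x z * (INR d + 1) < delta - nrm (vsub x y)).
  { apply Rmult_lt_reg_r with (/ (INR d + 1)). apply Rinv_0_lt_compat; lra.
    rewrite Rmult_assoc, Rinv_r by lra. rewrite Rmult_1_r. exact Hz. }
  nra.
Qed.

Lemma sum_f_lt f n : sum_f_R0 f n = sum_lt (S n) f.
Proof. induction n; simpl. lra. simpl in IHn. rewrite IHn. reflexivity. Qed.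

Lemma tail_small eta : 0 < eta -> exists r, mu (fun x => ~ nrm x < r) < eta.
Proof.
  intros Heta.
  set (Sh := fun m (x : Vec d) => nrm x < INR (S m) /\ ~ nrm x < INR m).
  assert (HB : forall r, borel (fun x : Vec d => nrm x < r)) by (intros; apply borel_open, open_ball0).
  assert (HSh : forall m, borel (Sh m)).
  { intros m. apply borel_I2; auto. apply borel_compl; auto. }
  assert (Hdj : forall m n x, m <> n -> Sh m x -> Sh n x -> False).
  { intros m n x Hmn [H1 H2] [H3 H4].
    destruct (Nat.lt_gt_cases m n) as [[H|H] _]; auto.
    - apply H4. apply Rlt_le_trans with (INR (S m)); auto. apply le_INR; lia.
    - apply H2. apply Rlt_le_trans with (INR (S n)); auto. apply le_INR; lia. }
  pose proof (proj2 (proj2 (proj2 Hmu)) Sh HSh Hdj) as Hs.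
  replace (fun x => exists n, Sh n x) with (fun _ : Vec d => True) in Hs.
  2:{ apply set_ext. intros x. split; auto. intros _.
      destruct (INR_unbounded (nrm x)) as [M HM].
      induction M.
      - simpl in HM. pose proof (nrm_nonneg d x). lra.
      - destruct (Rlt_dec (nrm x) (INR M)) as [H|H]; auto.
        exists M. split; auto. }
  rewrite mu_full in Hs by auto.
  assert (Hball : forall m, mu (fun x => nrm x < INR m) = sum_lt m (fun n => mu (Sh n))).
  { induction m.
    - simpl. replace (fun x : Vec d => nrm x < 0) with (fun _ : Vec d => False).
      apply mu_empty; auto.
      apply set_ext. intros x. simpl. pose proof (nrm_nonneg d x). split; [tauto|lra].
    - simpl sum_lt. rewrite <- IHm.
      replace (fun x => nrm x < INR (S m)) with (fun x => nrm x < INR m \/ Sh m x).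
      + rewrite mu_add2; auto. intros x H [_ H']. auto.
      + apply set_ext. intros x. unfold Sh. split.
        * intros [H|[H _]]; auto. apply Rlt_le_trans with (INR m); auto. apply le_INR; lia.
        * intros H. destruct (Rlt_dec (nrm x) (INR m)); auto. }
  destruct (Hs eta Heta) as [N0 HN0].
  exists (INR (S N0)). rewrite mu_compl; auto. rewrite Hball, <- sum_f_lt.
  pose proof (HN0 N0 (Nat.le_refl _)). unfold R_dist in H.
  apply Rabs_def2 in H. lra.
Qed.

Lemma mu_far_zero delta : 0 < delta -> mu (far delta) = 0.
Proof.
  intros Hdelta.
  assert (H0 : 0 <= mu (far delta)) by (apply mu_nonneg; auto; apply borel_far).
  destruct Hatt as [[y0 Hy0] [HXc HX]].
  destruct (compact_bounded d X HXc) as [Bx HBx].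
  assert (Hle : forall eta, 0 < eta -> mu (far delta) <= eta).
  { intros eta Heta.
    destruct (tail_small eta Heta) as [r Hr].
    destruct (unif_decay delta (r + Bx) Hdelta) as [n0 Hn0].
    rewrite (invariance_iter n0 (far delta) (borel_far delta)).
    apply Rle_trans with (lsum (words N n0) (fun I => p_word p I * mu (fun x => ~ nrm x < r))).
    - apply lsum_le_in. intros I HI. apply words_spec in HI. destruct HI as [HL HF].
      apply Rmult_le_compat_l. left. apply p_word_pos; auto.
      apply mu_mono; auto.
      + apply borel_preimage. apply cont_tw. apply borel_far.
      + apply borel_compl, borel_open, open_ball0.
      + intros x Hx Hxr. apply Hx. exists (tw I y0). split. apply tw_in_X; auto.
        rewrite tw_sub, HL. apply Hn0. lia.
        eapply Rle_trans. apply (nrm_triang d x (fun _ => 0) y0).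
        rewrite nrm_sub0, nrm_sym, nrm_sub0. pose proof (HBx y0 Hy0). lra.
    - rewrite <- lsum_mulr, sum_words_p. lra. }
  destruct (Rle_lt_or_eq_dec 0 _ H0) as [Hpos|Hz]; auto.
  pose proof (Hle (mu (far delta) / 2) ltac:(lra)). lra.
Qed.

Lemma tau_inj i x y : tau Rinv b i x = tau Rinv b i y -> x = y.
Proof.
  unfold tau. intros H. apply (f_equal (mv Rm)) in H. rewrite !Hinv1 in H.
  apply functional_extensionality. intros j. apply (f_equal (fun v => v j)) in H.
  unfold vadd in H. lra.
Qed.

Lemma tw_inj I x y : tw I x = tw I y -> x = y.
Proof. induction I; simpl; auto. intros H. apply IHI. eapply tau_inj; eauto. Qed.

Lemma list_eps (P : list nat -> R -> Prop) (l : list (list nat)) :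
  (forall I e e', 0 < e' <= e -> P I e -> P I e') ->
  (forall I, In I l -> exists e, 0 < e /\ P I e) -> exists e, 0 < e /\ forall I, In I l -> P I e.
Proof.
  intros Hmono. induction l as [|I l IH]; intros H.
  - exists 1. split. lra. intros _ [].
  - destruct (H I (or_introl eq_refl)) as [e1 [He1 HP1]].
    destruct (IH (fun J HJ => H J (or_intror HJ))) as [e2 [He2 HP2]].
    exists (Rmin e1 e2). split. apply Rmin_Rgt_r; auto.
    intros J [<-|HJ].
    + apply (Hmono I e1); auto. split. apply Rmin_Rgt_r; auto. apply Rmin_l.
    + apply (Hmono J e2); auto. split. apply Rmin_Rgt_r; auto. apply Rmin_r.
Qed.

Lemma main_pos (I0 : list nat) :
  (0 < length I0)%nat -> Forall (fun i => (i < N)%nat) I0 ->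
  fixed_point_condition Rinv N b X (length I0) (tw I0) ->
  exists (n0 : nat) (C : R), forall n : nat, (n0 <= n)%nat ->
    mu (image (Nat.iter n (tw I0)) X) = C * (p_map Rinv N b p (length I0) (tw I0)) ^ n.
Proof.
  intros Hk HF Hfp.
  set (k := length I0) in *.
  set (t := tw I0) in *.
  destruct Hatt as [[y0 Hy0] [HXc HX]].
  set (c := t (fun _ => 0)).
  assert (Haff : forall y, vadd (Nat.iter k L y) c = t y).
  { intros y. apply functional_extensionality. intros i. unfold vadd.
    pose proof (tw_sub I0 y (fun _ => 0)) as E. apply (f_equal (fun v => v i)) in E.
    unfold vsub in E. fold t k in E. replace (fun i : Fin.t d => y i - 0) with y in E.
    - unfold c. lra.
    - apply functional_extensionality; intros; ring. }
  destruct (LA.LA_fix d Rm Rinv Hexp Hinv1 k c Hk) as [xs Hxs].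
  rewrite Haff in Hxs.
  assert (Hitxs : forall m, Nat.iter m t xs = xs).
  { induction m; simpl; auto. rewrite IHm; auto. }
  assert (Hit_sub : forall m x y, vsub (Nat.iter m t x) (Nat.iter m t y) = Nat.iter (m * k) L (vsub x y)).
  { induction m; intros x y; simpl. reflexivity.
    unfold t at 1 3. rewrite tw_sub. fold k. rewrite IHm, <- Nat.iter_add. reflexivity. }
  assert (Hcont_it : forall m, cont (Nat.iter m t)).
  { intros m. apply cont_lip, lip_iter, lip_tw. }
  assert (HT : forall m, borel (image (Nat.iter m t) X)).
  { intros m. apply compact_borel, compact_image; auto. }
  destruct (list_eps (fun I e => tw I <> t -> forall y, image (tw I) X y -> e <= nrm (vsub y xs)) (words N k))
    as [eps [Heps Hsep]].
  { intros I e e' He' HP Hne y Hy. pose proof (HP Hne y Hy). lra. }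
  { intros I HI. destruct (classic (tw I = t)) as [E|E].
    - exists 1. split. lra. intros H; contradiction.
    - apply words_spec in HI. destruct HI as [HL HFI].
      assert (Hnot : ~ image (tw I) X xs).
      { apply (Hfp xs Hxs (tw I)); auto. exists I. auto. }
      destruct (compact_sep d (image (tw I) X) xs (compact_image d _ _ (cont_tw I) HXc) Hnot)
        as [e [He HP]].
      exists e. split; auto. }
  destruct (compact_bounded d X HXc) as [Bx HBx].
  destruct (iterL_bound k) as [K [HK HKb]].
  set (delta := eps / (2 * (K + 1))).
  assert (Hdelta : 0 < delta) by (unfold delta; apply Rdiv_lt_0_compat; lra).
  destruct (unif_decay (eps / 2) (Bx + nrm xs) ltac:(lra)) as [n0 Hn0].
  set (P := p_map Rinv N b p k t).
  assert (HPdef : P = lsum (words N k) (fun I => if excluded_middle_informative (tw I = t) then p_word p I else 0))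
    by reflexivity.
  assert (Hstep : forall m, (n0 <= m)%nat ->
    mu (image (Nat.iter (S m) t) X) = P * mu (image (Nat.iter m t) X)).
  { intros m Hm.
    rewrite (invariance_iter k _ (HT (S m))).
    rewrite HPdef, lsum_mulr. apply lsum_ext_in. intros I HI.
    destruct (excluded_middle_informative (tw I = t)) as [E|E].
    - rewrite E. f_equal. f_equal. apply set_ext. intros x. unfold preimage. split.
      + intros [y [Hy Hxy]]. simpl in Hxy. apply tw_inj in Hxy. exists y. auto.
      + intros [y [Hy Hxy]]. exists y. split; auto. simpl. rewrite Hxy. reflexivity.
    - rewrite Rmult_0_l. apply words_spec in HI. destruct HI as [HL HFI].
      rewrite (mu_zero_sub d mu Hmu _ (far delta)).
      + ring.
      + apply borel_preimage; auto. apply cont_tw.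
      + apply borel_far.
      + intros x [y0' [Hy0' Hx]] [y [Hy Hxy]].
        assert (H1 : nrm (vsub (tw I x) xs) < eps / 2).
        { rewrite Hx, <- (Hitxs (S m)) at 1. rewrite Hit_sub. apply Hn0.
          clearbody k. nia.
          eapply Rle_trans. apply (nrm_triang d y0' (fun _ => 0) xs).
          rewrite nrm_sub0, nrm_sym, nrm_sub0. pose proof (HBx y0' Hy0'). lra. }
        assert (H2 : eps <= nrm (vsub (tw I y) xs)).
        { apply (Hsep I). apply words_spec; auto. exact E. exists y. auto. }
        assert (H3 : nrm (vsub (tw I y) (tw I x)) <= K * delta).
        { rewrite tw_sub, HL. eapply Rle_trans. apply HKb. rewrite nrm_sym.
          apply Rmult_le_compat_l; auto. left; auto. }
        assert (H4 : K * delta <= eps / 2).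
        { unfold delta. apply Rle_trans with ((K + 1) * (eps / (2 * (K + 1)))).
          - apply Rmult_le_compat_r. left; auto. lra.
          - right. field. lra. }
        pose proof (nrm_triang d (tw I y) (tw I x) xs). lra.
      + apply mu_far_zero; auto. }
  assert (HP : 0 < P).
  { rewrite HPdef. apply (lsum_pos _ _ I0).
    - intros I HI. destruct (excluded_middle_informative (tw I = t)). 2: lra.
      apply words_spec in HI. left. apply p_word_pos. apply HI.
    - apply words_spec. split; auto.
    - destruct (excluded_middle_informative (tw I0 = t)) as [_|E]. apply p_word_pos; auto.
      exfalso; apply E; reflexivity. }
  exists n0, (mu (image (Nat.iter n0 t) X) / P ^ n0).
  intros n Hn.
  replace n with (n0 + (n - n0))%nat by lia.
  generalize (n - n0)%nat. intros j.
  assert (Hj : mu (image (Nat.iter (n0 + j) t) X) = mu (image (Nat.iter n0 t) X) * P ^ j).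
  { induction j. rewrite Nat.add_0_r. simpl. ring.
    replace (n0 + S j)%nat with (S (n0 + j)) by lia. rewrite Hstep by lia. rewrite IHj. simpl. ring. }
  rewrite Hj, pow_add. field. apply pow_nonzero. lra.
Qed.
End IFS.

From Stdlib Require Import Reals Lra Lia List Classical ClassicalEpsilon FunctionalExtensionality PropExtensionality.
Import ListNotations.
Open Scope R_scope.

Theorem proposition3p9 (d : nat) (Rm Rinv : Mat d) (N : nat) (b : nat -> Vec d)
  (p : nat -> R) (X : set d) (mu : set d -> R) (k : nat) (t : Vec d -> Vec d) :
  expansive Rm ->
  (forall x, mv Rm (mv Rinv x) = x) ->
  (forall x, mv Rinv (mv Rm x) = x) ->
  (forall i j, (i < N)%nat -> (j < N)%nat -> b i = b j -> i = j) ->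
  (forall i, (i < N)%nat -> 0 < p i) ->
  sum_lt N p = 1 ->
  is_attractor Rinv N b X ->
  is_prob_measure mu ->
  is_invariant Rinv N b p mu ->
  in_A Rinv N b k t ->
  fixed_point_condition Rinv N b X k t ->
  exists (n0 : nat) (C : R), forall n : nat, (n0 <= n)%nat ->
    mu (image (Nat.iter n t) X) = C * (p_map Rinv N b p k t) ^ n.
Proof.
  intros Hexp Hinv1 Hinv2 Hb Hp Hsum Hatt Hmu Hinvar HA Hfp.
  destruct HA as [I0 [HL [HF Ht]]]. subst t. subst k.
  destruct (Nat.eq_dec (length I0) 0) as [H0|H0].
  - apply length_zero_iff_nil in H0. subst I0.
    exists 0%nat, (mu X). intros n _.
    assert (E : image (Nat.iter n (tau_word Rinv b [])) X = X).
    { apply set_ext. intros x. assert (Hid : forall y, Nat.iter n (tau_word Rinv b []) y = y).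
      { intros y. induction n; simpl; auto. }
      split.
      - intros [y [Hy ->]]. rewrite Hid. auto.
      - intros Hx. exists x. rewrite Hid. auto. }
    rewrite E. unfold p_map. simpl.
    destruct (excluded_middle_informative _) as [_|E']; [|exfalso; apply E'; reflexivity].
    rewrite Rplus_0_r, pow1. ring.
  - eapply main_pos; eauto. lia.
Qed.
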